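(* Let $X$ be a topological space with $|X|\ge 2$ and $G$ an infinite Abelian group. If $X$ is not anti-discrete and has a base of clopen sets, then every Korovin orbit $G_f$ in $X^G$ is a regular zero-dimensional space.
   Context: $X^G$ carries the product topology. For $f\in X^G$ and $g\in G$ let $gf\in X^G$ be given by $(gf)(x)=f(xg)$, and let $G_f=\{gf:g\in G\}\subseteq X^G$ with the subspace topology. The map $f\colon G\to X$ is a Korovin mapping if $\pi_M(G_f)=X^M$ for every countable $M\subseteq G$, where $\pi_M\colon X^G\to X^M$ is the projection; in that case $G_f$ is called a Korovin orbit. A space is anti-discrete if its only open sets are $\emptyset$ and the whole space. Regular means $T_1$ and: every open neighborhood $U$ of a point $x$ contains an open neighborhood $V$ of $x$ with $\overline{V}\subseteq U$. Zero-dimensional means having a base of clopen sets. *)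

(* Defs.v *)
From HB Require Import structures.
From mathcomp Require Import all_boot all_order all_algebra.
From mathcomp Require Import all_classical all_reals all_analysis.
Set Implicit Arguments. Unset Strict Implicit. Unset Printing Implicit Defensive.
Import GRing.Theory.
Local Open Scope classical_set_scope.
Local Open Scope ring_scope.

(* gf : x |-> f (x g)  (additively: f (x + g)) *)
Definition translate {G : zmodType} {X : Type} (g : G) (f : G -> X) : G -> X :=
  fun x => f (x + g).

Definition orbit_set {G : zmodType} {X : topologicalType} (f : G -> X)
  : set {ptws G -> X} := [set translate g f | g in [set: G]].

(* f is a Korovin mapping: pi_M(G_f) = X^M for every countable M ⊆ G *)
Definition korovin {G : zmodType} {X : topologicalType} (f : G -> X) : Prop :=
  forall M : set G, countable M ->
    forall h : M -> X, exists2 k, orbit_set f k &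
      forall m : M, k (set_val m) = h m.

Definition anti_discrete (X : topologicalType) : Prop :=
  forall U : set X, open U -> U = set0 \/ U = setT.

Definition clopen_base (X : topologicalType) : Prop :=
  forall (x : X) (U : set X), open U -> U x ->
    exists V : set X, [/\ clopen V, V x & V `<=` U].

Definition regular_T1 (X : topologicalType) : Prop :=
  accessible_space X /\
  (forall (x : X) (U : set X), open U -> U x ->
     exists V : set X, [/\ open V, V x & closure V `<=` U]).

(* Main.v *)
Require Import Defs.
From HB Require Import structures.
From mathcomp Require Import all_boot all_order all_algebra.
From mathcomp Require Import all_classical all_reals all_analysis.
Local Open Scope classical_set_scope.

Lemma prod_clopen_base (I : eqType) (X : topologicalType) :
  clopen_base X -> clopen_base {ptws I -> X}.
Proof.
move=> cbX k U oU Uk.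
have FF : Filter (filter_from [set D : set {ptws I -> X} | D k /\ clopen D] id).
  apply: filter_from_filter; first by exists setT; split=> //; exact: clopenT.
  move=> A B [Ak cA] [Bk cB]; exists (A `&` B); last by [].
  by split; [split|exact: clopenI].
suff : filter_from [set D : set {ptws I -> X} | D k /\ clopen D] id --> k.
  move=> /(_ U); case; first exact: open_nbhs_nbhs.
  by move=> D [Dk cD] DU; exists D.
apply/cvg_sup => i A /=.
rewrite (@nbhsE (@initial_topology (forall _ : I, X) X (fun f => f i))) => -[B [oB Bk] BA].
case: oB => O oO Oeq.
have Ok : O (k i) by rewrite -Oeq in Bk.
have [W [cW Wk WO]] := cbX (k i) O oO Ok.
exists ((fun f : {ptws I -> X} => f i) @^-1` W).
  split; first exact: Wk.
  apply: preimage_clopen => //; exact: (@proj_continuous I (fun _ => X) i).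
by move=> g /WO Og; apply: BA; rewrite -Oeq.
Qed.

Lemma sub_clopen_base (Y : topologicalType) (A : set Y) :
  clopen_base Y -> clopen_base (set_type A).
Proof.
move=> cb x U oU Ux.
case: oU => O oO Oeq.
have Ox : O (set_val x) by rewrite -Oeq in Ux.
have [W [cW Wx WO]] := cb _ O oO Ox.
exists (set_val @^-1` W); split => //.
  apply: preimage_clopen => //; exact: initial_continuous.
by move=> z /WO Oz; rewrite -Oeq.
Qed.

Theorem proposition4p6 (X : topologicalType) (G : zmodType) :
  (exists x y : X, x <> y) ->
  infinite_set [set: G] ->
  ~ anti_discrete X ->
  clopen_base X ->
  forall f : G -> X, korovin f ->
    regular_T1 (set_type (orbit_set f)) /\ clopen_base (set_type (orbit_set f)).
Proof.
move=> _ _ nAD cbX f kf.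
have cbS : clopen_base (set_type (orbit_set f)).
  by apply: sub_clopen_base; apply: prod_clopen_base.
split=> //; split; last first.
  move=> x U oU Ux; have [V [[oV cV] Vx VU]] := cbS x U oU Ux.
  by exists V; split=> //; rewrite -(closure_id V).1.
have [U [oU [a Ua] [b nUb]]] : exists U : set X, [/\ open U, exists a, U a & exists b, ~ U b].
  apply: contrapT => H; apply: nAD => U oU.
  have [[a Ua]|n] := pselect (exists a, U a); last first.
    by left; apply/seteqP; split=> // z Uz; apply: n; exists z.
  right; apply/seteqP; split=> // z _; apply: contrapT => nUz; apply: H.
  by exists U; split=> //; [exists a | exists z].
move=> x y /eqP xy.
have [gx _ ex] := set_mem (valP x).
have [gy _ ey] := set_mem (valP y).
have gxy : gx <> gy.
  move=> e; apply: xy; apply: val_inj; by rewrite -ex -ey e.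
pose M := [set gx; gy].
have cM : countable M by apply: finite_set_countable; exact: finite_set2.
pose h := fun m : set_type M => if set_val m == gx then a else b.
have [k [g _ ek] hk] := kf M cM h.
have Mx : gx \in M by apply/mem_set; left.
have My : gy \in M by apply/mem_set; right.
have hx := hk (exist _ gx Mx).
have hy := hk (exist _ gy My).
rewrite /h /= eqxx in hx.
rewrite /h /= (negbTE (introN eqP (nesym gxy))) in hy.
exists [set z : set_type (orbit_set f) | U (set_val z g)]; split.
- exists [set l : {ptws G -> X} | U (l g)] => //.
  exact: (proj1 (@continuousP {ptws G -> X} X (fun l => l g)) (@proj_continuous G (fun _ => X) g)).

- apply/mem_set; rewrite /= set_valE /= -ex /translate GRing.addrC.
  by move: hx; rewrite set_valE /= -ek /translate => ->.
- apply/mem_set; rewrite /= set_valE /= -ey /translate GRing.addrC.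
  by move: hy; rewrite set_valE /= -ek /translate => ->.
Qed.
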